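(* Let $\sigma(x,y)=(x\rightharpoonup y,x\leftharpoonup y)$ be an involutive non-degenerate quiver-theoretic Yang--Baxter map on a quiver $\mathscr{A}$ over $\Lambda$. Define $x\star y:=(x\rightharpoonup\cdot)^{-1}(y)$ for $\mathfrak{s}(x)=\mathfrak{s}(y)$, $x\bullet y:=(\cdot\leftharpoonup x)^{-1}(y)$ for $\mathfrak{t}(x)=\mathfrak{t}(y)$, and $x\,\tilde\star\,y:=y\bullet x$. Then $(\mathscr{A},\star,\tilde\star)$ is a weak RLC-system.
   Context: A quiver-theoretic Yang--Baxter map is a source/target-preserving map $\sigma$ on composable pairs $\mathscr{A}\otimes\mathscr{A}$ satisfying the braid relation; involutive: $\sigma^2=\mathrm{id}$; non-degenerate: all maps $x\rightharpoonup\cdot\colon\mathscr{A}(\mathfrak{t}(x),\Lambda)\to\mathscr{A}(\mathfrak{s}(x),\Lambda)$ and $\cdot\leftharpoonup y\colon\mathscr{A}(\Lambda,\mathfrak{s}(y))\to\mathscr{A}(\Lambda,\mathfrak{t}(y))$ are bijective. A weak RC-system $(Q,\star)$: partial operation with $x\star y$ defined only if $\mathfrak{s}(x)=\mathfrak{s}(y)$; if $x\star y$ is defined so is $y\star x$, with $\mathfrak{s}(x\star y)=\mathfrak{t}(x)$, $\mathfrak{s}(y\star x)=\mathfrak{t}(y)$, $\mathfrak{t}(x\star y)=\mathfrak{t}(y\star x)$; and if $x\star y$, $x\star z$, $(x\star y)\star(x\star z)$ are defined then $y\star z$, $(y\star x)\star(y\star z)$ are defined and $(x\star y)\star(x\star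 z)=(y\star x)\star(y\star z)$. A weak co-RC-system $(Q,\bullet)$: $x\bullet y$ defined only if $\mathfrak{t}(x)=\mathfrak{t}(y)$; if defined, $y\bullet x$ is defined with $\mathfrak{t}(x\bullet y)=\mathfrak{s}(x)$, $\mathfrak{t}(y\bullet x)=\mathfrak{s}(y)$, $\mathfrak{s}(x\bullet y)=\mathfrak{s}(y\bullet x)$; and the same law $(x\bullet y)\bullet(x\bullet z)=(y\bullet x)\bullet(y\bullet z)$ with the same definedness clause. A weak LC-system $(Q,\tilde\star)$ is one such that $x\bullet y:=y\,\tilde\star\,x$ makes $(Q,\bullet)$ a weak co-RC-system. A weak RLC-system $(Q,\star,\tilde\star)$ is such that $(Q,\star)$ is a weak RC-system, $(Q,\tilde\star)$ a weak LC-system, and: if $x\star y$ is defined then $(y\star x)\,\tilde\star\,(x\star y)$ is defined and equals $x$; if $x\,\tilde\star\,y$ is defined then $(y\,\tilde\star\,x)\star(x\,\tilde\star\,y)$ is defined and equals $x$. *)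

(* Defs.v *)
From Stdlib Require Import ClassicalEpsilon.

Set Implicit Arguments.

Section Quiver.
Variables (Lambda A : Type) (s t : A -> Lambda).

(* Composable pairs x (x) y : t x = s y.  sigma(x,y) = (lh x y, rh x y),
   where lh x y = x -> y  (left harpoon) and rh x y = x <- y. The maps
   lh, rh are total functions, only their values on composable pairs matter. *)
Variables (lh rh : A -> A -> A).

Definition sigma (p : A * A) : A * A := (lh (fst p) (snd p), rh (fst p) (snd p)).

Definition composable (x y : A) : Prop := t x = s y.

Definition st_preserving : Prop :=
  forall x y, composable x y ->
    s (lh x y) = s x /\ composable (lh x y) (rh x y) /\ t (rh x y) = t y.

Definition sigma12 (p : A * A * A) : A * A * A :=
  let '(x, y, z) := p in (lh x y, rh x y, z).
Definition sigma23 (p : A * A * A) : A * A * A :=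
  let '(x, y, z) := p in (x, lh y z, rh y z).

Definition braid : Prop :=
  forall x y z, composable x y -> composable y z ->
    sigma12 (sigma23 (sigma12 (x, y, z))) = sigma23 (sigma12 (sigma23 (x, y, z))).

Definition involutive : Prop :=
  forall x y, composable x y -> sigma (sigma (x, y)) = (x, y).

Definition nondegenerate : Prop :=
  (forall x,
     (forall y1 y2, s y1 = t x -> s y2 = t x -> lh x y1 = lh x y2 -> y1 = y2) /\
     (forall z, s z = s x -> exists y, s y = t x /\ lh x y = z)) /\
  (forall y,
     (forall x1 x2, t x1 = s y -> t x2 = s y -> rh x1 y = rh x2 y -> x1 = x2) /\
     (forall z, t z = t y -> exists x, t x = s y /\ rh x y = z)).

Definition YB_map : Prop := st_preserving /\ braid.

Definition star (x y : A) : option A :=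
  match excluded_middle_informative (s x = s y) with
  | left _ => Some (epsilon (inhabits x) (fun z => s z = t x /\ lh x z = y))
  | right _ => None
  end.

Definition bullet (x y : A) : option A :=
  match excluded_middle_informative (t x = t y) with
  | left _ => Some (epsilon (inhabits x) (fun z => t z = s x /\ rh z x = y))
  | right _ => None
  end.

Definition startilde (x y : A) : option A := bullet y x.

End Quiver.

Section Systems.
Variables (Lambda A : Type) (s t : A -> Lambda).

(* partial operations are functions A -> A -> option A; None = undefined *)
Definition weak_RC (op : A -> A -> option A) : Prop :=
  (forall x y, op x y <> None -> s x = s y) /\
  (forall x y a, op x y = Some a ->
     exists b, op y x = Some b /\ s a = t x /\ s b = t y /\ t a = t b) /\
  (forall x y z a b c, op x y = Some a -> op x z = Some b -> op a b = Some c ->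
     exists d e, op y z = Some d /\ op y x = Some e /\ op e d = Some c).

Definition weak_coRC (op : A -> A -> option A) : Prop :=
  (forall x y, op x y <> None -> t x = t y) /\
  (forall x y a, op x y = Some a ->
     exists b, op y x = Some b /\ t a = s x /\ t b = s y /\ s a = s b) /\
  (forall x y z a b c, op x y = Some a -> op x z = Some b -> op a b = Some c ->
     exists d e, op y z = Some d /\ op y x = Some e /\ op e d = Some c).

Definition weak_LC (opt : A -> A -> option A) : Prop :=
  weak_coRC (fun x y => opt y x).

Definition weak_RLC (op opt : A -> A -> option A) : Prop :=
  weak_RC op /\ weak_LC opt /\
  (forall x y a, op x y = Some a ->
     exists b, op y x = Some b /\ opt b a = Some x) /\
  (forall x y a, opt x y = Some a ->
     exists b, opt y x = Some b /\ op b a = Some x).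

End Systems.

(* Main.v *)
Require Import Defs.
From Stdlib Require Import ClassicalEpsilon.

Lemma star_some (Lambda A : Type) (s t : A -> Lambda) (lh rh : A -> A -> A) :
  nondegenerate s t lh rh -> forall x y z,
  star s t lh x y = Some z <-> (s x = s y /\ s z = t x /\ lh x z = y).
Proof.
  intros [N1 N2] x y z. unfold star.
  destruct (excluded_middle_informative (s x = s y)) as [e|e].
  - assert (ex : exists w, s w = t x /\ lh x w = y).
    { destruct (N1 x) as [_ S]. apply S. congruence. }
    pose proof (epsilon_spec (inhabits x) _ ex) as [E1 E2].
    split.
    + intros H. injection H as <-. auto.
    + intros [_ [H1 H2]]. f_equal. destruct (N1 x) as [I _].
      apply I; congruence.
  - split; [discriminate | intros [H _]; contradiction].
Qed.

Lemma bullet_some (Lambda A : Type) (s t : A -> Lambda) (lh rh : A -> A -> A) :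
  nondegenerate s t lh rh -> forall x y z,
  bullet s t rh x y = Some z <-> (t x = t y /\ t z = s x /\ rh z x = y).
Proof.
  intros [N1 N2] x y z. unfold bullet.
  destruct (excluded_middle_informative (t x = t y)) as [e|e].
  - assert (ex : exists w, t w = s x /\ rh w x = y).
    { destruct (N2 x) as [_ S]. apply S. congruence. }
    pose proof (epsilon_spec (inhabits x) _ ex) as [E1 E2].
    split.
    + intros H. injection H as <-. auto.
    + intros [_ [H1 H2]]. f_equal. destruct (N2 x) as [I _].
      apply I; congruence.
  - split; [discriminate | intros [H _]; contradiction].
Qed.

Theorem proposition5p3 (Lambda A : Type) (s t : A -> Lambda) (lh rh : A -> A -> A) :
  YB_map s t lh rh -> involutive s t lh rh -> nondegenerate s t lh rh ->
  weak_RLC s t (star s t lh) (startilde s t rh).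
Proof.
  intros [SP BR] INV ND.
  pose proof (@star_some Lambda A s t lh rh ND) as SS.
  pose proof (@bullet_some Lambda A s t lh rh ND) as BS.
  unfold weak_RLC, weak_LC, startilde.
  assert (Ist : forall x a, composable s t x a ->
     lh (lh x a) (rh x a) = x /\ rh (lh x a) (rh x a) = a).
  { intros x a H. pose proof (INV x a H) as E. unfold sigma in E; simpl in E.
    injection E; auto. }
  assert (St2 : forall x y a, star s t lh x y = Some a ->
     star s t lh y x = Some (rh x a) /\ t (rh x a) = t a).
  { intros x y a H. apply SS in H as [e [H1 H2]].
    destruct (SP x a (eq_sym H1)) as [P1 [P2 P3]]. destruct (Ist x a (eq_sym H1)) as [Q1 Q2].
    unfold composable in *. split; [|auto].
    apply SS. subst y. auto. }
  assert (Bu2 : forall x y a, bullet s t rh x y = Some a ->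
     bullet s t rh y x = Some (lh a x) /\ s (lh a x) = s a).
  { intros x y a H. apply BS in H as [e [H1 H2]].
    assert (C : composable s t a x) by (unfold composable; auto).
    destruct (SP a x C) as [P1 [P2 P3]]. destruct (Ist a x C) as [Q1 Q2].
    unfold composable in *. split; [|auto].
    apply BS. subst y. auto. }
  split; [|split; [|split]].
  -
    split; [|split].
    + intros x y H. unfold star in H.
      destruct (excluded_middle_informative (s x = s y)); [auto|congruence].
    + intros x y a H. exists (rh x a).
      destruct (St2 x y a H) as [H1 H2]. apply SS in H as [e [E1 E2]].
      pose proof H1 as H1'. apply SS in H1' as [_ [F1 F2]].
      repeat split; auto; congruence.
    + intros x y z a b c Ha Hb Hc.
      destruct (St2 x y a Ha) as [He _].
      apply SS in Ha as [ea [A1 A2]]. apply SS in Hb as [eb [B1 B2]].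
      apply SS in Hc as [ec [C1 C2]].
      set (e := rh x a) in *.
      assert (Cxa : composable s t x a) by (unfold composable; auto).
      assert (Cac : composable s t a c) by (unfold composable; auto).
      pose proof (BR x a c Cxa Cac) as BRe.
      unfold sigma12, sigma23 in BRe. rewrite A2, C2, B2 in BRe.
      fold e in BRe. injection BRe as R1 R2 R3.
      destruct (SP x a Cxa) as [P1 [P2 P3]]. fold e in P1, P2, P3. rewrite A2 in *.
      assert (Cec : composable s t e c) by (unfold composable in *; congruence).
      destruct (SP e c Cec) as [U1 [U2 U3]].
      exists (lh e c), e. split; [|split].
      * apply SS. unfold composable in *. repeat split; congruence.
      * exact He.
      * apply SS. unfold composable in *. repeat split; congruence.
  -
    split; [|split].
    + intros x y H. unfold bullet in H.
      destruct (excluded_middle_informative (t x = t y)); [auto|congruence].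
    + intros x y a H. exists (lh a x).
      destruct (Bu2 x y a H) as [H1 H2]. apply BS in H as [e [E1 E2]].
      pose proof H1 as H1'. apply BS in H1' as [_ [F1 F2]].
      repeat split; auto; congruence.
    + intros x y z a b c Ha Hb Hc.
      destruct (Bu2 x y a Ha) as [He _].
      apply BS in Ha as [ea [A1 A2]]. apply BS in Hb as [eb [B1 B2]].
      apply BS in Hc as [ec [C1 C2]].
      set (e := lh a x) in *.
      assert (Cca : composable s t c a) by (unfold composable; auto).
      assert (Cax : composable s t a x) by (unfold composable; auto).
      pose proof (BR c a x Cca Cax) as BRe.
      unfold sigma12, sigma23 in BRe. rewrite A2, C2, B2 in BRe.
      fold e in BRe. injection BRe as R1 R2 R3.
      destruct (SP a x Cax) as [P1 [P2 P3]]. fold e in P1, P2, P3. rewrite A2 in *.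
      assert (Cce : composable s t c e) by (unfold composable in *; congruence).
      destruct (SP c e Cce) as [U1 [U2 U3]].
      exists (rh c e), e. split; [|split].
      * apply BS. unfold composable in *. repeat split; congruence.
      * exact He.
      * apply BS. unfold composable in *. repeat split; congruence.
  - intros x y a H. exists (rh x a).
    destruct (St2 x y a H) as [H1 H2]. split; [exact H1|].
    apply SS in H as [e [E1 E2]].
    apply BS. repeat split; auto.
  - intros x y a H. exists (lh a y).
    destruct (Bu2 y x a H) as [H1 H2]. split; [exact H1|].
    apply BS in H as [e [E1 E2]].
    assert (C : composable s t a y) by (unfold composable; auto).
    destruct (SP a y C) as [P1 [P2 P3]]. destruct (Ist a y C) as [Q1 Q2].
    rewrite E2 in *. unfold composable in *.
    apply SS. repeat split; congruence.
Qed.
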